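(* Let $M\in\mathbb R^{\mathbb N\times\mathbb N}$ be bounded on $\ell_2$ and elliptic (there is $C_{\rm ell}>0$ with $Mx\cdot x\ge C_{\rm ell}\|x\|_{\ell_2}^2$ for all $x$). Let $n_1=1<n_2<\cdots$ be a block structure and let $M$ be block-banded: $M(i,j)=0$ for $|i-j|>b_0$, some $b_0\in\mathbb N$. Then the block-$LU$-factorization $M=LU$ with $L$ block-lower triangular, $U$ block-upper triangular and $L(i,i)=I$ for all $i$ exists, $L$ and $U$ are block-banded with bandwidth $b_0$, and \[\|L\|_2+\|U\|_2+\|L^{-1}\|_2+\|U^{-1}\|_2<\infty.\] Moreover, the block-diagonal matrix $D$ with $D(i,i):=U(i,i)$ is bounded and elliptic, with bounded and elliptic inverse.
   Context: $\|\cdot\|_2$ is the operator norm on $\ell_2$. Block notation: $M(i,j)=M|_{\{n_i,\dots,n_{i+1}-1\}\times\{n_j,\dots,n_{j+1}-1\}}$. Block-lower (upper) triangular means $M(i,j)=0$ for $i<j$ ($i>j$); block-banded with bandwidth $b$ means $M(i,j)=0$ for $|i-j|>b$. *)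

(* Defs.v *)
(* Infinite matrices are functions
   nat -> nat -> R (0-based indices). *)
From HB Require Import structures.
From mathcomp Require Import all_boot all_order all_algebra.
From mathcomp Require Import all_classical all_reals all_analysis.
Set Implicit Arguments. Unset Strict Implicit. Unset Printing Implicit Defensive.
Import Order.TTheory GRing.Theory Num.Theory.
Import numFieldNormedType.Exports.
Local Open Scope classical_set_scope.
Local Open Scope ring_scope.

Section Defs.
Variable R : realType.
Implicit Types (A B C : nat -> nat -> R) (n : nat -> nat).

(* A defines a bounded operator on l2: all finite sections are uniformly
   bounded (C plays the role of ||A||_2^2). *)
Definition bounded_mx A := exists C : R, forall (N m : nat) (x : nat -> R),
  \sum_(i < m) (\sum_(j < N) A i j * x j) ^+ 2 <= C * \sum_(j < N) x j ^+ 2.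

(* Ax . x >= c ||x||^2 (tested on finitely supported x, dense in l2). *)
Definition elliptic_mx A := exists c : R, 0 < c /\ forall (N : nat) (x : nat -> R),
  c * \sum_(i < N) x i ^+ 2 <= \sum_(i < N) \sum_(j < N) x i * A i j * x j.

(* block structure n_1 = 1 < n_2 < ... , shifted to 0-based: n 0 = 0 *)
Definition block_structure n := n 0 = 0%N /\ forall i, (n i < n i.+1)%N.
Definition in_block n (i r : nat) := (n i <= r < n i.+1)%N.

Definition block_lower n A := forall i j r c,
  in_block n i r -> in_block n j c -> (i < j)%N -> A r c = 0.
Definition block_upper n A := forall i j r c,
  in_block n i r -> in_block n j c -> (j < i)%N -> A r c = 0.
Definition block_banded n (b : nat) A := forall i j r c,
  in_block n i r -> in_block n j c -> ((b < i - j) || (b < j - i))%N -> A r c = 0.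
Definition unit_diag_blocks n A := forall i r c,
  in_block n i r -> in_block n i c -> A r c = (r == c)%:R.
Definition block_diag_part n (U D : nat -> nat -> R) := forall i j r c,
  in_block n i r -> in_block n j c -> D r c = (if i == j then U r c else 0).

Definition idmx : nat -> nat -> R := fun r c => (r == c)%:R.
Definition mx_prod_is A B C := forall i k,
  ((fun N : nat => \sum_(j < N) A i j * B j k) @ \oo --> C i k).
Definition inverse_mx A B := mx_prod_is A B idmx /\ mx_prod_is B A idmx.
End Defs.

(* Main.v *)
Require Import Defs.
From HB Require Import structures.
From mathcomp Require Import all_boot all_order all_algebra.
From mathcomp Require Import all_classical all_reals all_analysis.
From mathcomp Require Import lra zify ring.
Import Order.TTheory GRing.Theory Num.Theory.
Local Open Scope ring_scope.

Set Implicit Arguments. Unset Strict Implicit. Unset Printing Implicit Defensive.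
Import numFieldNormedType.Exports.
Local Open Scope classical_set_scope.


Lemma ev_cst (R : realType) (f : nat -> R) (l : R) (N0 : nat) :
  (forall N, (N0 <= N)%N -> f N = l) -> f @ \oo --> l.
Proof.
move=> H; apply: cvg_near_cst; exists N0 => // N /= HN; exact: H.
Qed.

Section Fin.
Variable R : realType.
Implicit Types (A B : nat -> nat -> R).

Definition inv_on N A B := forall r c, (r < N)%N -> (c < N)%N ->
  \sum_(p < N) A r p * B p c = (r == c)%:R.

Lemma inv_on_sym N A B : inv_on N A B -> inv_on N B A.
Proof.
move=> H.
pose Am := \matrix_(i < N, j < N) A i j.
pose Bm := \matrix_(i < N, j < N) B i j.
have HAB : Am *m Bm = 1%:M.
  apply/matrixP => i j; rewrite !mxE -(H i j) //.
  by apply: eq_bigr => k _; rewrite !mxE.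
move/mulmx1C: HAB => HBA r c hr hc.
have := congr1 (fun X : 'M[R]_(N) => X (Ordinal hr) (Ordinal hc)) HBA.
rewrite !mxE /= => <-.
by apply: eq_bigr => k _; rewrite !mxE.
Qed.

Lemma inv_on_ex N A :
  (forall x : nat -> R, (forall c, (c < N)%N -> \sum_(r < N) x r * A r c = 0) ->
     forall r, (r < N)%N -> x r = 0) -> exists B, inv_on N A B.
Proof.
case: N => [|N] H; first by exists A => r c.
pose Am := \matrix_(i < N.+1, j < N.+1) A i j.
have hdet : \det Am != 0.
  apply/negP => /det0P [v vn0 vA].
  pose x := fun r : nat => if (r < N.+1)%N then v 0 (inord r) else 0.
  have hx := H x.
  have : v = 0.
    apply/rowP => i; rewrite mxE.
    have := hx _ i (ltn_ord i); rewrite /x (ltn_ord i) inord_val; apply.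
    move=> c hc.
    have := congr1 (fun X : 'rV[R]_(N.+1) => X 0 (Ordinal hc)) vA.
    rewrite !mxE => E; rewrite -[RHS]E.
    by apply: eq_bigr => k _; rewrite !mxE /x (ltn_ord k) inord_val.
  by move/eqP; rewrite (negbTE vn0).
have hu : Am \in unitmx by rewrite unitmxE unitfE.
exists (fun p c => invmx Am (inord p) (inord c)).
move=> r c hr hc.
have := congr1 (fun X : 'M[R]_(N.+1) => X (Ordinal hr) (Ordinal hc)) (mulmxV hu).
rewrite !mxE /= => E.
transitivity ((r == c)%:R : R); last by [].
rewrite -[X in _ = X]E.
have -> : inord c = Ordinal hc :> 'I_N.+1 by apply: val_inj; rewrite /= inordK.
by apply: eq_bigr => k _; rewrite !mxE inord_val.
Qed.
End Fin.


Section Blocks.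
Variable n : nat -> nat.
Hypothesis bs : block_structure n.

Lemma n_lt i j : (i < j)%N -> (n i < n j)%N.
Proof.
case: bs => _ hs; elim: j => // j IH; rewrite ltnS leq_eqVlt => /orP [/eqP -> //|].
by move/IH => h; exact: ltn_trans h (hs j).
Qed.

Lemma n_le i j : (i <= j)%N -> (n i <= n j)%N.
Proof. by rewrite leq_eqVlt => /orP [/eqP -> //|/n_lt/ltnW]. Qed.

Lemma n_ge i : (i <= n i)%N.
Proof.
case: bs => h0 hs; elim: i => // i IH; exact: leq_ltn_trans IH (hs i).
Qed.

Lemma n_lt_iff i j : (n i < n j)%N = (i < j)%N.
Proof.
apply/idP/idP; last exact: n_lt.
by apply: contraLR; rewrite -!leqNgt => /n_le.
Qed.

Lemma n_le_iff i j : (n i <= n j)%N = (i <= j)%N.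
Proof. by rewrite leqNgt [RHS]leqNgt n_lt_iff. Qed.

Lemma ex_blk0 r : exists i, (r < n i.+1)%N.
Proof. exists r; exact: leq_trans (n_ge r.+1). Qed.

Definition blk r := ex_minn (ex_blk0 r).

Lemma blkP r : in_block n (blk r) r.
Proof.
rewrite /blk; case: ex_minnP => i hi hmin; rewrite /in_block hi andbT.
case: i hi hmin => [|i] hi hmin; first by case: bs => -> .
by rewrite leqNgt; apply/negP => /hmin; rewrite ltnn.
Qed.

Lemma blk_uniq i j r : in_block n i r -> in_block n j r -> i = j.
Proof.
rewrite /in_block => /andP [h1 h2] /andP [h3 h4].
apply/eqP; rewrite eqn_leq; apply/andP; split.
  rewrite -ltnS -n_lt_iff; exact: leq_ltn_trans h1 h4.
rewrite -ltnS -n_lt_iff; exact: leq_ltn_trans h3 h2.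
Qed.

Lemma blkE i r : in_block n i r -> blk r = i.
Proof. move=> h; exact: blk_uniq (blkP r) h. Qed.

Lemma blk_lo r : (n (blk r) <= r)%N.
Proof. by case/andP: (blkP r). Qed.
Lemma blk_hi r : (r < n (blk r).+1)%N.
Proof. by case/andP: (blkP r). Qed.

Lemma ltn_blk r k : (r < n k)%N = (blk r < k)%N.
Proof.
apply/idP/idP => h.
  rewrite ltnNge; apply/negP => hk.
  have := leq_trans (n_le hk) (blk_lo r); rewrite leqNgt h //.
apply: leq_trans (blk_hi r) _; exact: n_le.
Qed.

Lemma leq_blk r k : (n k <= r)%N = (k <= blk r)%N.
Proof. by rewrite leqNgt ltn_blk -leqNgt. Qed.

Lemma blk_mono r s : (r <= s)%N -> (blk r <= blk s)%N.
Proof. move=> h; rewrite -ltnS -ltn_blk; exact: leq_ltn_trans h (blk_hi s). Qed.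

End Blocks.


Section Tools.
Variable R : realType.

Lemma sum_trunc (f : nat -> R) K N : (forall p, (K <= p)%N -> f p = 0) -> (K <= N)%N ->
  \sum_(p < N) f p = \sum_(p < K) f p.
Proof.
move=> hf hKN; rewrite -(subnKC hKN) big_split_ord /= [X in _ + X]big1 ?addr0 // => i _.
by apply: hf; rewrite leq_addr.
Qed.

Lemma sum_delta_l (f : nat -> R) r N : (r < N)%N -> \sum_(q < N) (r == q)%:R * f q = f r.
Proof.
move=> hr; rewrite (bigD1 (Ordinal hr)) //= eqxx mul1r big1 ?addr0 // => i hi.
rewrite (_ : (r == i) = false) ?mul0r //; apply/negbTE; apply: contra hi => /eqP h.
by apply/eqP/val_inj.
Qed.

Lemma sum_delta_r (f : nat -> R) c N : (c < N)%N -> \sum_(q < N) f q * ((q : nat) == c)%:R = f c.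
Proof.
move=> hc; rewrite -[RHS](sum_delta_l f hc); apply: eq_bigr => i _.
by rewrite mulrC eq_sym.
Qed.

Lemma sum_ind (f : nat -> R) K N : (K <= N)%N ->
  \sum_(q < N) ((q < K)%N)%:R * f q = \sum_(q < K) f q.
Proof.
move=> hKN; rewrite (@sum_trunc (fun q => ((q < K)%N)%:R * f q) K N) //; last by move=> p hp; rewrite ltnNge hp mul0r.
by apply: eq_bigr => i _; rewrite ltn_ord mul1r.
Qed.

Lemma sum_exch3 (a : nat -> R) (b c : nat -> nat -> R) N1 N2 :
  \sum_(p < N1) (\sum_(q < N2) a q * b q p) * c p 0 =
  \sum_(q < N2) a q * \sum_(p < N1) b q p * c p 0.
Proof.
under eq_bigr => p _ do rewrite mulr_suml.
rewrite exchange_big; apply: eq_bigr => q _; rewrite mulr_sumr.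
by apply: eq_bigr => p _; rewrite mulrA.
Qed.

Lemma sum_blocks (n : nat -> nat) (bs : block_structure n) (f : nat -> R) K :
  \sum_(r < n K) f r = \sum_(i < K) \sum_(n i <= r < n i.+1) f r.
Proof.
elim: K => [|K IH]; first by case: bs => ->; rewrite !big_ord0.
rewrite big_ord_recr /= -IH -!(big_mkord xpredT f).
rewrite [LHS](@big_cat_nat _ _ _ (n K)) //; exact: n_le.
Qed.

End Tools.

Lemma sum_exch3' (R : realType) (a : nat -> R) (b : nat -> nat -> R) (c : nat -> R) N1 N2 :
  \sum_(p < N1) a p * (\sum_(s < N2) b p s * c s) =
  \sum_(s < N2) (\sum_(p < N1) a p * b p s) * c s.
Proof.
under eq_bigr => p _ do rewrite mulr_sumr.
rewrite exchange_big; apply: eq_bigr => s _; rewrite mulr_suml.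
by apply: eq_bigr => p _; rewrite mulrA.
Qed.


Section Core.
Variable R : realType.
Variable n : nat -> nat.
Hypothesis bs : block_structure n.
Variable M : nat -> nat -> R.
Variable G : nat -> nat -> nat -> R.
Hypothesis hMG : forall k, inv_on (n k) M (G k).
Hypothesis hGM : forall k, inv_on (n k) (G k) M.
Local Notation bk := (@blk n bs).

Definition Linv r c := (r == c)%:R -
  ((c < n (bk r))%N)%:R * \sum_(q < n (bk r)) M r q * G (bk r) q c.
Definition Um r c := M r c -
  \sum_(p < n (bk r)) (\sum_(q < n (bk r)) M r q * G (bk r) q p) * M p c.
Definition Lm r c := \sum_(s < n (bk c).+1) M r s * G (bk c).+1 s c.
Definition Uinv r c := ((r < n (bk c).+1)%N)%:R * G (bk c).+1 r c.
Definition Dinv r c := (bk r == bk c)%:R * G (bk c).+1 r c.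

Lemma hM_id r k s : (s < n k)%N ->
  \sum_(p < n k) (\sum_(q < n k) M r q * G k q p) * M p s = M r s.
Proof.
move=> hs.
rewrite (sum_exch3 (fun q => M r q) (G k) (fun p _ => M p s)).
under eq_bigr => q _ do rewrite hGM //.
exact: sum_delta_r.
Qed.

Lemma L_delta r c : (r < n (bk c).+1)%N -> Lm r c = (r == c)%:R.
Proof. by move=> hr; rewrite /Lm hMG // blk_hi. Qed.

Lemma U_zero r c : (c < n (bk r))%N -> Um r c = 0.
Proof. by move=> hc; rewrite /Um hM_id // subrr. Qed.

Lemma Linv_sum r c N : (n (bk r).+1 <= N)%N ->
  \sum_(q < N) Linv r q * M q c = Um r c.
Proof.
move=> hN.
under eq_bigr => q _ do rewrite /Linv mulrBl -mulrA.
rewrite sumrB (sum_delta_l (fun q => M q c)); last exact: leq_trans (blk_hi bs r) hN.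
rewrite (sum_ind (fun q => (\sum_(q0 < n (bk r)) M r q0 * G (bk r) q0 q) * M q c)); last first.
  apply: leq_trans hN; exact: ltnW (n_lt bs (ltnSn _)).
by [].
Qed.

Lemma Linv_low r p : (n (bk r).+1 <= p)%N -> Linv r p = 0.
Proof.
move=> hp; have hrp : (r < p)%N := leq_trans (blk_hi bs r) hp.
rewrite /Linv (_ : (r == p) = false); last by apply/negbTE; rewrite neq_ltn hrp.
rewrite ltnNge (leq_trans (blk_lo bs r) (ltnW hrp)) /= mul0r subr0 //.
Qed.

Lemma L_low r p : (n (bk r).+1 <= p)%N -> Lm r p = 0.
Proof.
move=> hp; have hrp : (r < p)%N := leq_trans (blk_hi bs r) hp.
rewrite L_delta; last first.
  apply: leq_trans (blk_hi bs r) _; rewrite (n_le_iff bs); apply: leq_trans (leqnSn _).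
  by rewrite -(leq_blk bs).
by rewrite (_ : (r == p) = false) //; apply/negbTE; rewrite neq_ltn hrp.
Qed.

Lemma LinvL r c N : (n (bk r).+1 <= N)%N ->
  \sum_(p < N) Linv r p * Lm p c = (r == c)%:R.
Proof.
move=> hN.
have hrN : (r < N)%N := leq_trans (blk_hi bs r) hN.
have hiN : (n (bk r) <= N)%N := leq_trans (ltnW (n_lt bs (ltnSn _))) hN.
under eq_bigr => q _ do rewrite /Linv mulrBl -mulrA.
rewrite sumrB (sum_delta_l (fun q => Lm q c)) // (sum_ind (fun q => (\sum_(q0 < n (bk r)) M r q0 * G (bk r) q0 q) * Lm q c)) //.
case: (ltnP c (n (bk r))) => hc.
-
  have hj : (bk c < bk r)%N by rewrite -(ltn_blk bs).
  have -> : (r == c) = false.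
    by apply/negbTE; rewrite neq_ltn (leq_trans hc (blk_lo bs r)) orbT.
  rewrite /Lm.
  rewrite (sum_exch3' (fun q => \sum_(q0 < n (bk r)) M r q0 * G (bk r) q0 q) (fun q s => M q s) (fun s => G (bk c).+1 s c)).
  rewrite [X in _ - X](_ : _ = \sum_(s < n (bk c).+1) M r s * G (bk c).+1 s c) ?subrr //.
  apply: eq_bigr => s _; congr (_ * _); apply: hM_id.
  by apply: leq_trans (ltn_ord s) _; rewrite (n_le_iff bs).
- have hi : (bk r <= bk c)%N by rewrite -(leq_blk bs).
  rewrite big1 ?subr0; last first.
    move=> p _; rewrite L_delta; last first.
      apply: leq_trans (ltn_ord p) _; rewrite (n_le_iff bs); exact: leq_trans hi (leqnSn _).
    rewrite (_ : (p == c :> nat) = false) ?mulr0 //.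
    by apply/negbTE; rewrite neq_ltn (leq_trans (ltn_ord p) hc).
  by rewrite L_delta //; apply: leq_trans (blk_hi bs r) _; rewrite (n_le_iff bs).
Qed.

End Core.


Section Core2.
Variable R : realType.
Variable n : nat -> nat.
Hypothesis bs : block_structure n.
Variable M : nat -> nat -> R.
Variable G : nat -> nat -> nat -> R.
Hypothesis hMG : forall k, inv_on (n k) M (G k).
Hypothesis hGM : forall k, inv_on (n k) (G k) M.
Local Notation bk := (@blk n bs).
Local Notation Linv := (Linv bs M G).
Local Notation Um := (Um bs M G).
Local Notation Lm := (Lm bs M G).
Local Notation Uinv := (Uinv bs G).
Local Notation Dinv := (Dinv bs G).

Definition lowK (A : nat -> nat -> R) :=
  forall K r p, (r < n K)%N -> (n K <= p)%N -> A r p = 0.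
Definition upK (A : nat -> nat -> R) :=
  forall K p c, (c < n K)%N -> (n K <= p)%N -> A p c = 0.

Lemma lowK_Linv : lowK Linv.
Proof.
move=> K r p hr hp; apply: Linv_low; apply: leq_trans hp.
by rewrite (n_le_iff bs) -(ltn_blk bs).
Qed.

Lemma lowK_L : lowK Lm.
Proof.
move=> K r p hr hp; apply: (L_low hMG); apply: leq_trans hp.
by rewrite (n_le_iff bs) -(ltn_blk bs).
Qed.

Lemma upK_U : upK Um.
Proof.
move=> K p c hc hp; apply: (U_zero hGM); apply: leq_trans hc _.
by rewrite (n_le_iff bs) -(leq_blk bs).
Qed.

Lemma Uinv_up p c : (n (bk c).+1 <= p)%N -> Uinv p c = 0.
Proof. by move=> h; rewrite /Uinv ltnNge h mul0r. Qed.

Lemma upK_Uinv : upK Uinv.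
Proof.
move=> K p c hc hp; apply: Uinv_up; apply: leq_trans hp.
by rewrite (n_le_iff bs) -(ltn_blk bs).
Qed.

Lemma UUinv r c N : (n (bk c).+1 <= N)%N ->
  \sum_(p < N) Um r p * Uinv p c = (r == c)%:R.
Proof.
move=> hN.
rewrite (@sum_trunc _ (fun p => Um r p * Uinv p c) (n (bk c).+1)) //; last first.
  by move=> p hp; rewrite Uinv_up // mulr0.
under eq_bigr => p _ do rewrite /Uinv ltn_ord mul1r.
case: (leqP (bk r) (bk c)) => hrc.
- have hN' : (n (bk r).+1 <= n (bk c).+1)%N by rewrite (n_le_iff bs).
  under eq_bigr => p _ do rewrite -(Linv_sum M G p hN').
  rewrite (sum_exch3 (fun q => Linv r q) (fun q p => M q p) (fun p _ => G (bk c).+1 p c)).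
  under eq_bigr => q _ do rewrite hMG ?blk_hi //.
  rewrite (sum_delta_r (fun q => Linv r q)) ?blk_hi //.
  rewrite /Linv ltnNge (leq_trans _ (blk_lo bs c)) ?mul0r ?subr0 //.
  by rewrite (n_le_iff bs).
- rewrite big1; last first.
    move=> p _; rewrite (U_zero hGM) ?mul0r //; apply: leq_trans (ltn_ord p) _.
    by rewrite (n_le_iff bs).
  case: eqP => // erc; move: hrc; rewrite erc ltnn //.
Qed.

Lemma LU r c N : (n (bk r).+1 <= N)%N ->
  \sum_(p < N) Lm r p * Um p c = M r c.
Proof.
move=> hN.
set N0 := n (bk r).+1.
rewrite (@sum_trunc _ (fun p => Lm r p * Um p c) N0) //; last first.
  by move=> p hp; rewrite (L_low hMG) // mul0r.
have hsec : inv_on N0 Lm Linv.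
  apply: inv_on_sym => r' c' hr' hc'; apply: (LinvL hMG hGM).
  by rewrite (n_le_iff bs) -(ltn_blk bs).
rewrite (eq_bigr (fun p : 'I_N0 => Lm r p * \sum_(q < N0) Linv p q * M q c)); last first.
  move=> p _; rewrite (@Linv_sum _ _ bs M G p c N0) //.
  by rewrite (n_le_iff bs) -(ltn_blk bs).
rewrite (sum_exch3' (fun p => Lm r p) (fun p q => Linv p q) (fun q => M q c)).
under eq_bigr => q _ do rewrite hsec ?blk_hi //.
by rewrite (sum_delta_l (fun q => M q c)) ?blk_hi.
Qed.

Lemma inv_gen (A B : nat -> nat -> R) :
  (lowK A /\ lowK B) \/ (upK A /\ upK B) ->
  (forall r c, exists N0, forall N, (N0 <= N)%N -> \sum_(p < N) A r p * B p c = (r == c)%:R) ->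
  inverse_mx A B.
Proof.
move=> hAB H; split.
  move=> r c; have [N0 h] := H r c; exact: (ev_cst h).
move=> r c.
set K := (r + c).+1.
have hrK : (r < n K)%N by apply: leq_trans (n_ge bs K); rewrite ltnS leq_addr.
have hcK : (c < n K)%N by apply: leq_trans (n_ge bs K); rewrite ltnS leq_addl.
have hsec : inv_on (n K) B A.
  apply: inv_on_sym => r' c' hr' hc'.
  have [N0 h] := H r' c'.
  rewrite -(h (maxn N0 (n K))) ?leq_maxl //; symmetry.
  apply: (@sum_trunc _ (fun p => A r' p * B p c') (n K)); last exact: leq_maxr.
  move=> p hp; case: hAB => [[hA _]|[_ hB]]; first by rewrite (hA K) ?mul0r.
  by rewrite (hB K) ?mulr0.
apply: (@ev_cst _ _ _ (n K)) => N hN.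
rewrite (@sum_trunc _ (fun p => B r p * A p c) (n K)) //; first exact: hsec.
move=> p hp; case: hAB => [[_ hB]|[hA _]]; first by rewrite (hB K) ?mul0r.
by rewrite (hA K) ?mulr0.
Qed.

End Core2.


Section Core3.
Variable R : realType.
Variable n : nat -> nat.
Hypothesis bs : block_structure n.
Variable M : nat -> nat -> R.
Variable G : nat -> nat -> nat -> R.
Hypothesis hMG : forall k, inv_on (n k) M (G k).
Hypothesis hGM : forall k, inv_on (n k) (G k) M.
Local Notation bk := (@blk n bs).
Local Notation Linv := (Linv bs M G).
Local Notation Um := (Um bs M G).
Local Notation Lm := (Lm bs M G).
Local Notation Uinv := (Uinv bs G).
Local Notation Dinv := (Dinv bs G).

Lemma blk_lower_L : block_lower n Lm.
Proof.
move=> i j r c hr hc hij.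
rewrite -(blkE bs hr) -(blkE bs hc) in hij.
rewrite (L_delta hMG); last by apply: leq_trans (blk_hi bs r) _; rewrite (n_le_iff bs) ltnW.
case: eqP => // e; by move: hij; rewrite e ltnn.
Qed.

Lemma blk_upper_U : block_upper n Um.
Proof.
move=> i j r c hr hc hij.
rewrite -(blkE bs hr) -(blkE bs hc) in hij.
apply: (U_zero hGM); apply: leq_trans (blk_hi bs c) _; by rewrite (n_le_iff bs).
Qed.

Lemma unit_diag_L : unit_diag_blocks n Lm.
Proof.
move=> i r c hr hc; rewrite (L_delta hMG) //.
by rewrite (blkE bs hc); case/andP: hr.
Qed.

Lemma prod_LU : mx_prod_is Lm Um M.
Proof.
move=> r c; apply: (@ev_cst _ _ _ (n (bk r).+1)) => N hN; exact: (LU hMG hGM).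
Qed.

Lemma banded_L b0 : block_banded n b0 M -> block_banded n b0 Lm.
Proof.
move=> hb i j r c hr hc hij.
have ei := blkE bs hr; have ej := blkE bs hc.
case/orP: hij => h.
- rewrite /Lm big1 // => s _; rewrite (hb i (bk s) r s hr (blkP bs s)) ?mul0r //.
  apply/orP; left; apply: leq_trans h _; apply: leq_sub2l.
  by rewrite -ltnS -(ltn_blk bs) -ej.
- apply: (blk_lower_L hr hc); rewrite -subn_gt0; exact: leq_ltn_trans (leq0n b0) h.
Qed.

Lemma banded_U b0 : block_banded n b0 M -> block_banded n b0 Um.
Proof.
move=> hb i j r c hr hc hij.
have ei := blkE bs hr; have ej := blkE bs hc.
case/orP: hij => h.
- apply: (blk_upper_U hr hc); rewrite -subn_gt0; exact: leq_ltn_trans (leq0n b0) h.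
- rewrite /Um (hb i j r c hr hc) ?h ?orbT // sub0r big1 ?oppr0 // => p _.
  rewrite (hb (bk p) j p c (blkP bs p) hc) ?mulr0 //.
  apply/orP; right; apply: leq_trans h _; apply: leq_sub2l.
  by rewrite ltnW // -(ltn_blk bs) -ei.
Qed.

Lemma inv_L : inverse_mx Lm Linv.
Proof.
have [h1 h2] : inverse_mx Linv Lm.
  apply: (inv_gen bs); first by left; split; [exact: (lowK_Linv bs M G) | exact: (@lowK_L _ _ bs M G hMG)].
  move=> r c; exists (n (bk r).+1) => N hN; exact: (LinvL hMG hGM).
by split.
Qed.

Lemma inv_U : inverse_mx Um Uinv.
Proof.
apply: (inv_gen bs); first by right; split; [exact: (@upK_U _ _ bs M G hGM) | exact: (@upK_Uinv _ _ bs G)].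
move=> r c; exists (n (bk c).+1) => N hN; exact: (UUinv hMG hGM).
Qed.

Lemma D_eq D : block_diag_part n Um D ->
  forall r c, D r c = if bk r == bk c then Um r c else 0.
Proof. by move=> hD r c; rewrite (hD _ _ _ _ (blkP bs r) (blkP bs c)). Qed.

Lemma inv_D D : block_diag_part n Um D -> inverse_mx D Dinv.
Proof.
move=> hD; have hDe := D_eq hD.
apply: (inv_gen bs).
  right; split.
    move=> K p c hc hp; rewrite hDe; case: eqP => // _; exact: (@upK_U _ _ bs M G hGM) hc hp.
  move=> K p c hc hp; rewrite /Dinv; case: eqP => [e|]; last by rewrite mul0r.
  move: hc hp; rewrite (ltn_blk bs) (leq_blk bs) e => h1 h2.
  by move: (leq_ltn_trans h2 h1); rewrite ltnn.
move=> r c; exists (n (bk c).+1) => N hN.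
rewrite (@sum_trunc _ (fun p => D r p * Dinv p c) (n (bk c).+1)) //; last first.
  move=> p hp; rewrite /Dinv; case: eqP => [e|]; last by rewrite mul0r mulr0.
  by move: hp; rewrite (leq_blk bs) e ltnn.
case: (eqVneq (bk r) (bk c)) => e.
- rewrite -(UUinv hMG hGM r (leqnn _)); apply: eq_bigr => p _.
  rewrite hDe /Dinv /Uinv ltn_ord.
  case: (eqVneq (bk p) (bk c)) => ep; first by rewrite e ep eqxx.
  rewrite e eq_sym (negbTE ep) mul0r mul1r (U_zero hGM) ?mul0r // e.
  have := ltn_ord p; rewrite (ltn_blk bs) ltnS.
  rewrite leq_eqVlt (negbTE ep) /= => h; by rewrite (ltn_blk bs).
- rewrite big1.
    by case: eqP => // erc; move: e; rewrite erc eqxx.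
  move=> p _; rewrite hDe /Dinv.
  case: (eqVneq (bk r) (bk p)) => e1; last by rewrite mul0r.
  by rewrite -e1 (negbTE e) !mul0r mulr0.
Qed.

End Core3.


Section ATools.
Variable R : realType.
Implicit Types (A : nat -> nat -> R) (x y a : nat -> R).

Lemma sq2 (p q : R) : 2 * (p * q) <= p ^+ 2 + q ^+ 2.
Proof. rewrite -subr_ge0 (_ : _ - _ = (p - q) ^+ 2); [exact: sqr_ge0 | ring]. Qed.

Lemma sqB (p q : R) : (p - q) ^+ 2 <= 2 * p ^+ 2 + 2 * q ^+ 2.
Proof. rewrite -subr_ge0 (_ : _ - _ = (p + q) ^+ 2); [exact: sqr_ge0 | ring]. Qed.

Lemma wcs a y K : (forall j, 0 <= a j) ->
  (\sum_(j < K) a j * y j) ^+ 2 <= (\sum_(j < K) a j) * \sum_(j < K) a j * y j ^+ 2.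
Proof.
move=> ha.
have E1 : (\sum_(j < K) a j * y j) ^+ 2 =
    \sum_(j < K) \sum_(k < K) a j * a k * (y j * y k).
  rewrite expr2 mulr_suml; apply: eq_bigr => j _; rewrite mulr_sumr.
  by apply: eq_bigr => k _; ring.
have E2 : (\sum_(j < K) a j) * \sum_(j < K) a j * y j ^+ 2 =
    \sum_(j < K) \sum_(k < K) a j * a k * y k ^+ 2.
  rewrite mulr_suml; apply: eq_bigr => j _; rewrite mulr_sumr.
  by apply: eq_bigr => k _; ring.
have E3 : (\sum_(j < K) a j) * \sum_(j < K) a j * y j ^+ 2 =
    \sum_(j < K) \sum_(k < K) a j * a k * y j ^+ 2.
  rewrite E2 exchange_big; apply: eq_bigr => j _; apply: eq_bigr => k _; ring.
rewrite -(@ler_pM2l _ 2) // [X in _ <= X]mulr_natl mulr2n.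
rewrite [X in _ <= X + _]E3 E2 -big_split /= E1 mulr_sumr.
apply: ler_sum => j _; rewrite mulr_sumr -big_split /=; apply: ler_sum => k _.
rewrite -mulrDr mulrCA; apply: ler_wpM2l; first by apply: mulr_ge0.
by have := sq2 (y j) (y k); rewrite (_ : (1 + 1 : R) = 2) //; lra.
Qed.

Lemma sum_widen_le (f : nat -> R) m N : (m <= N)%N -> (forall i, 0 <= f i) ->
  \sum_(i < m) f i <= \sum_(i < N) f i.
Proof.
move=> hmN hf; rewrite -(subnKC hmN) big_split_ord /= lerDl.
by apply: sumr_ge0 => i _.
Qed.

Lemma sum_rng_le (f : nat -> R) m N : (forall i, 0 <= f i) ->
  \sum_(m <= i < N) f i <= \sum_(i < N) f i.
Proof.
move=> hf; case: (leqP m N) => hmN; last first.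
  rewrite big_geq; [by apply: sumr_ge0 => i _ | exact: ltnW].
rewrite -(big_mkord xpredT f) [X in _ <= X](@big_cat_nat _ _ _ m) //=.
rewrite -[X in X <= _]add0r; apply: lerD => //.
by apply: sumr_ge0 => i _.
Qed.

Lemma sum_rng_mask (f : nat -> R) m N : (m <= N)%N ->
  \sum_(i < N) (if (m <= i)%N then f i else 0) = \sum_(m <= i < N) f i.
Proof.
move=> hmN; rewrite -(big_mkord xpredT (fun i => if (m <= i)%N then f i else 0)).
rewrite (@big_cat_nat _ _ _ m) //= big_nat_cond big1 ?add0r; last first.
  by move=> i /andP [/andP [_ h] _]; rewrite leqNgt h.
by apply: eq_big_nat => i /andP [h _]; rewrite h.
Qed.

Lemma nrm_ge0 N x : 0 <= \sum_(j < N) x j ^+ 2.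
Proof. by apply: sumr_ge0 => j _; exact: sqr_ge0. Qed.

Lemma bnd_C_ge0 A C : (forall N m x, \sum_(i < m) (\sum_(j < N) A i j * x j) ^+ 2 <=
  C * \sum_(j < N) x j ^+ 2) -> 0 <= C.
Proof.
move=> h; have := h 1%N 0%N (fun _ => 1); rewrite big_ord0 big_ord1 expr1n mulr1; exact.
Qed.

Lemma cnt_nat (a w K : nat) : (\sum_(j < K) ((a <= j) && (j < a + w)) <= w)%N.
Proof.
apply: (@leq_trans (\sum_(j < K + (a + w)) ((a <= j) && (j < a + w)))).
  by rewrite big_split_ord /= leq_addr.
rewrite -(big_mkord xpredT (fun j => nat_of_bool ((a <= j) && (j < a + w))%N)).
rewrite (@big_cat_nat _ _ _ a) //=; last by rewrite addnCA leq_addr.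
rewrite [X in (X + _ <= _)%N](eq_big_nat _ _ (F2 := fun _ => 0%N)); last first.
  by move=> i /andP [_ h]; rewrite leqNgt h.
rewrite big1_eq add0n.
rewrite (@big_cat_nat _ _ _ (a + w)) ?leq_addr ?leq_addl //=.
  rewrite [X in (_ + X <= _)%N](eq_big_nat _ _ (F2 := fun _ => 0%N)); last first.
    by move=> i /andP [h _]; rewrite ltnNge h andbF.
  rewrite big1_eq addn0.
  rewrite (eq_big_nat _ _ (F2 := fun _ => 1%N)); last by move=> i ->.
  by rewrite sum_nat_const_nat addKn muln1.
Qed.

Lemma cnt_near (i b K : nat) :
  \sum_(j < K) (((j <= i + b) && (i <= j + b))%N)%:R <= ((2 * b).+1)%:R :> R.
Proof.
rewrite -natr_sum ler_nat; apply: leq_trans (cnt_nat (i - b) (2 * b).+1 K).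
apply: leq_sum => j _; case E: ((j <= i + b) && (i <= j + b))%N => //=.
move/andP: E => [h1 h2]; rewrite (_ : (i - b <= j < i - b + (2*b).+1)%N = true) //; apply/andP; split; lia.
Qed.

End ATools.

Section ABlocks.
Variable R : realType.
Variable n : nat -> nat.
Hypothesis bs : block_structure n.
Local Notation bk := (@blk n bs).
Implicit Types (A : nat -> nat -> R) (x y : nat -> R).

Definition secbnd A C := forall K x,
  \sum_(r < n K) (\sum_(c < n K) A r c * x c) ^+ 2 <= C * \sum_(c < n K) x c ^+ 2.

Lemma bnd_sec A C : secbnd A C -> bounded_mx A.
Proof.
move=> h; exists C => N m x.
set K := (N + m)%N.
have hNK : (N <= n K)%N by apply: leq_trans (n_ge bs K); rewrite leq_addr.
have hmK : (m <= n K)%N by apply: leq_trans (n_ge bs K); rewrite leq_addl.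
pose x' := fun j => if (j < N)%N then x j else 0.
have ex : forall f : nat -> R, \sum_(j < N) f j * x j = \sum_(j < n K) f j * x' j.
  move=> f; rewrite (@sum_trunc _ (fun j => f j * x' j) N) //.
    by apply: eq_bigr => j _; rewrite /x' ltn_ord.
  by move=> p hp; rewrite /x' ltnNge hp mulr0.
have enr : \sum_(j < N) x j ^+ 2 = \sum_(j < n K) x' j ^+ 2.
  rewrite (@sum_trunc _ (fun j => x' j ^+ 2) N) //.
    by apply: eq_bigr => j _; rewrite /x' ltn_ord.
  by move=> p hp; rewrite /x' ltnNge hp expr0n.
apply: le_trans (sum_widen_le (f := fun i => (\sum_(j < N) A i j * x j) ^+ 2) hmK _) _.
  by move=> i; exact: sqr_ge0.
under eq_bigr => i _ do rewrite ex.
by rewrite enr; exact: h.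
Qed.

Lemma ell_sec A c : 0 < c -> (forall K x, c * \sum_(r < n K) x r ^+ 2 <=
  \sum_(r < n K) \sum_(s < n K) x r * A r s * x s) -> elliptic_mx A.
Proof.
move=> hc h; exists c; split => // N x.
have hNK : (N <= n N)%N by exact: n_ge.
pose x' := fun j => if (j < N)%N then x j else 0.
have enr : \sum_(j < N) x j ^+ 2 = \sum_(j < n N) x' j ^+ 2.
  rewrite (@sum_trunc _ (fun j => x' j ^+ 2) N) //.
    by apply: eq_bigr => j _; rewrite /x' ltn_ord.
  by move=> p hp; rewrite /x' ltnNge hp expr0n.
have eq : \sum_(i < N) \sum_(j < N) x i * A i j * x j =
          \sum_(i < n N) \sum_(j < n N) x' i * A i j * x' j.
  rewrite (@sum_trunc _ (fun i => \sum_(j < n N) x' i * A i j * x' j) N) //; last first.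
    by move=> p hp; rewrite big1 // => j _; rewrite /x' ltnNge hp !mul0r.
  apply: eq_bigr => i _.
  rewrite (@sum_trunc _ (fun j => x' i * A i j * x' j) N) //; last first.
    by move=> p hp; rewrite /x' [(p < N)%N]ltnNge hp mulr0.
  by apply: eq_bigr => j _; rewrite /x' !ltn_ord.
by rewrite enr eq; exact: h.
Qed.

End ABlocks.


Section Banded.
Variable R : realType.
Variable n : nat -> nat.
Hypothesis bs : block_structure n.
Local Notation bk := (@blk n bs).
Implicit Types (A : nat -> nat -> R) (x y : nat -> R).

Lemma banded_bnd A b Cb : block_banded n b A -> 0 <= Cb ->
  (forall i j w, \sum_(n i <= r < n i.+1) (\sum_(n j <= c < n j.+1) A r c * w c) ^+ 2
     <= Cb * \sum_(n j <= c < n j.+1) w c ^+ 2) ->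
  secbnd n A (((2 * b).+1)%:R ^+ 2 * Cb).
Proof.
move=> hb hCb hblk K x.
set D : R := ((2 * b).+1)%:R.
have hD : 0 <= D by rewrite /D ler0n.
pose a i j : R := (((j <= i + b) && (i <= j + b))%N)%:R.
have ha : forall i j, 0 <= a i j by move=> i j; rewrite /a ler0n.
pose y (i j r : nat) := \sum_(n j <= c < n j.+1) A r c * x c.
pose nx j := \sum_(n j <= c < n j.+1) x c ^+ 2.
have E1 : \sum_(r < n K) (\sum_(c < n K) A r c * x c) ^+ 2 =
   \sum_(i < K) \sum_(n i <= r < n i.+1) (\sum_(j < K) a i j * y i j r) ^+ 2.
  rewrite (@sum_blocks _ n bs (fun r => (\sum_(c < n K) A r c * x c) ^+ 2)).
  apply: eq_bigr => i _; apply: eq_big_nat => r hr.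
  congr (_ ^+ 2); rewrite (@sum_blocks _ n bs (fun c => A r c * x c)); apply: eq_bigr => j _.
  rewrite /a; case: (boolP (_ && _)) => hn; first by rewrite mul1r.
  rewrite mul0r /y big_nat_cond big1 // => c /andP [hc _].
  rewrite (hb i j r c hr hc) ?mul0r //.
  by move: hn; rewrite negb_and -!ltnNge => /orP [h|h]; apply/orP; [right|left]; lia.
rewrite E1.
apply: (@le_trans _ _ (\sum_(i < K) \sum_(n i <= r < n i.+1) D * \sum_(j < K) a i j * y i j r ^+ 2)).
  apply: ler_sum => i _; apply: ler_sum => r _.
  have h1 : forall j, a i j * y i j r = a i j * (y i j r).
    by [].
  apply: le_trans (wcs (y i ^~ r) K (ha i)) _.
  apply: ler_wpM2r; first by apply: sumr_ge0 => j _; apply: mulr_ge0 => //; exact: sqr_ge0.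
  exact: cnt_near.
have E2 : \sum_(i < K) \sum_(n i <= r < n i.+1) D * \sum_(j < K) a i j * y i j r ^+ 2 =
   D * \sum_(j < K) \sum_(i < K) a i j * \sum_(n i <= r < n i.+1) y i j r ^+ 2.
  under eq_bigr => i _ do rewrite -mulr_sumr.
  rewrite -mulr_sumr; congr (D * _).
  rewrite (eq_bigr (fun i : 'I_K => \sum_(j < K) \sum_(n i <= r < n i.+1) a i j * y i j r ^+ 2)); last first.
    by move=> i _; rewrite exchange_big.
  rewrite exchange_big; apply: eq_bigr => j _; apply: eq_bigr => i _.
  by rewrite mulr_sumr.
rewrite E2.
have E3 : \sum_(c < n K) x c ^+ 2 = \sum_(j < K) nx j by rewrite (@sum_blocks _ n bs (fun c => x c ^+ 2)).
rewrite E3 -mulrA expr2 -mulrA; apply: ler_wpM2l => //.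
rewrite mulr_sumr mulr_sumr; apply: ler_sum => j _.
apply: (@le_trans _ _ (\sum_(i < K) a i j * (Cb * nx j))).
  apply: ler_sum => i _; apply: ler_wpM2l => //; exact: hblk.
rewrite -mulr_suml; apply: (@le_trans _ _ (D * (Cb * nx j))); last by rewrite mulrA.
apply: ler_wpM2r.
  by apply: mulr_ge0 => //; apply: sumr_ge0 => c _; exact: sqr_ge0.
rewrite /a; under eq_bigr => i _ do rewrite andbC.
exact: cnt_near.
Qed.

End Banded.


Section Anal.
Variable R : realType.
Variable n : nat -> nat.
Hypothesis bs : block_structure n.
Variable M : nat -> nat -> R.
Variable G : nat -> nat -> nat -> R.
Hypothesis hMG : forall k, inv_on (n k) M (G k).
Hypothesis hGM : forall k, inv_on (n k) (G k) M.
Variable CM : R.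
Hypothesis hCM : forall (N m : nat) (x : nat -> R), \sum_(i < m) (\sum_(j < N) M i j * x j) ^+ 2 <=
  CM * \sum_(j < N) x j ^+ 2.
Variable c : R.
Hypothesis hc : 0 < c.
Hypothesis hell : forall (N : nat) (x : nat -> R), c * \sum_(i < N) x i ^+ 2 <=
  \sum_(i < N) \sum_(j < N) x i * M i j * x j.
Local Notation bk := (@blk n bs).
Local Notation Linv := (Linv bs M G).
Local Notation Um := (Um bs M G).
Local Notation Lm := (Lm bs M G).
Local Notation Uinv := (Uinv bs G).
Local Notation Dinv := (Dinv bs G).

Lemma amgm_fin (c0 X Y S : R) : 0 < c0 -> 0 <= X -> c0 * X <= S ->
  2 * c0 * S <= c0 ^+ 2 * X + Y -> X <= Y / c0 ^+ 2.
Proof. move=> *. rewrite ler_pdivlMr; [nra | nra]. Qed.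

Lemma CM0 : 0 <= CM.
Proof. exact: bnd_C_ge0 hCM. Qed.

Definition Gv k (y : nat -> R) p := \sum_(q < n k) G k p q * y q.

Lemma MGv k y r : (r < n k)%N -> \sum_(p < n k) M r p * Gv k y p = y r.
Proof.
move=> hr; rewrite /Gv (sum_exch3' (fun p => M r p) (fun p q => G k p q) y).
under eq_bigr => q _ do rewrite hMG //.
exact: sum_delta_l.
Qed.

Lemma G_bound k y : \sum_(p < n k) Gv k y p ^+ 2 <= (c ^+ 2)^-1 * \sum_(q < n k) y q ^+ 2.
Proof.
set x := Gv k y.
set X := \sum_(p < n k) x p ^+ 2; set Y := \sum_(q < n k) y q ^+ 2.
set S := \sum_(i < n k) x i * y i.
have hX : 0 <= X by exact: nrm_ge0.
have h1 : c * X <= S.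
  rewrite (_ : S = \sum_(i < n k) \sum_(j < n k) x i * M i j * x j); first exact: hell.
  rewrite /S; apply: eq_bigr => i _; rewrite -{1}(MGv y (ltn_ord i)) mulr_sumr.
  by apply: eq_bigr => j _; rewrite mulrA.
have h2 : 2 * c * S <= c ^+ 2 * X + Y.
  rewrite /S /X /Y mulr_sumr mulr_sumr -big_split /=; apply: ler_sum => i _.
  rewrite (_ : 2 * c * (x i * y i) = 2 * ((c * x i) * y i)); last by ring.
  by apply: le_trans (sq2 _ _) _; rewrite exprMn.
rewrite mulrC; exact: (amgm_fin hc hX h1 h2).
Qed.

Definition msk2 j (w : nat -> R) cc :=
  if (n j <= cc)%N && (cc < n j.+1)%N then w cc else 0.

Lemma msk_sum j w (f : nat -> R) N : (n j.+1 <= N)%N ->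
  \sum_(cc < N) f cc * msk2 j w cc = \sum_(n j <= cc < n j.+1) f cc * w cc.
Proof.
move=> hN.
rewrite (@sum_trunc _ (fun cc => f cc * msk2 j w cc) (n j.+1)) //; last first.
  by move=> p hp; rewrite /msk2 ltnNge hp andbF mulr0.
rewrite -(@sum_rng_mask _ (fun cc => f cc * w cc) (n j) (n j.+1)); last first.
  exact: ltnW (n_lt bs (ltnSn j)).
apply: eq_bigr => i _; rewrite /msk2 ltn_ord andbT.
by case: ifP => _; rewrite ?mulr0.
Qed.

Lemma msk_nrm j w N : (n j.+1 <= N)%N ->
  \sum_(cc < N) msk2 j w cc ^+ 2 = \sum_(n j <= cc < n j.+1) w cc ^+ 2.
Proof.
move=> hN; rewrite -(msk_sum w w hN); apply: eq_bigr => i _.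
rewrite /msk2; case: ifP => _; by rewrite ?expr2 ?mulr0.
Qed.

Lemma sq_ind (b : bool) (v : R) : (b%:R * v) ^+ 2 = b%:R * v ^+ 2.
Proof. by case: b; rewrite ?mul1r ?mul0r ?expr0n. Qed.

Lemma L_rep j w r :
  \sum_(n j <= cc < n j.+1) Lm r cc * w cc =
  \sum_(s < n j.+1) M r s * Gv j.+1 (msk2 j w) s.
Proof.
rewrite (@eq_big_nat _ _ _ _ _ _ (fun cc => (\sum_(s < n j.+1) M r s * G j.+1 s cc) * w cc)); last first.
  by move=> cc hcc; rewrite /Lm (blkE bs hcc).
rewrite -(msk_sum w (fun cc => \sum_(s < n j.+1) M r s * G j.+1 s cc) (leqnn _)).
rewrite -sum_exch3' //.
Qed.

Lemma L_blk i j w :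
  \sum_(n i <= r < n i.+1) (\sum_(n j <= cc < n j.+1) Lm r cc * w cc) ^+ 2 <=
  (CM * (c ^+ 2)^-1) * \sum_(n j <= cc < n j.+1) w cc ^+ 2.
Proof.
under eq_bigr => r _ do rewrite L_rep.
apply: (le_trans (@sum_rng_le _ (fun r => (\sum_(s < n j.+1) M r s * Gv j.+1 (msk2 j w) s) ^+ 2) (n i) (n i.+1) _)).
  by move=> r; exact: sqr_ge0.
apply: le_trans (hCM (n j.+1) (n i.+1) (Gv j.+1 (msk2 j w))) _.
rewrite -mulrA; apply: ler_wpM2l; first exact: CM0.
rewrite -(msk_nrm w (leqnn _)); exact: G_bound.
Qed.

End Anal.


Section Anal2.
Variable R : realType.
Variable n : nat -> nat.
Hypothesis bs : block_structure n.
Variable M : nat -> nat -> R.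
Variable G : nat -> nat -> nat -> R.
Hypothesis hMG : forall k, inv_on (n k) M (G k).
Hypothesis hGM : forall k, inv_on (n k) (G k) M.
Variable CM : R.
Hypothesis hCM : forall (N m : nat) (x : nat -> R), \sum_(i < m) (\sum_(j < N) M i j * x j) ^+ 2 <=
  CM * \sum_(j < N) x j ^+ 2.
Variable c : R.
Hypothesis hc : 0 < c.
Hypothesis hell : forall (N : nat) (x : nat -> R), c * \sum_(i < N) x i ^+ 2 <=
  \sum_(i < N) \sum_(j < N) x i * M i j * x j.
Local Notation bk := (@blk n bs).
Local Notation Linv := (Linv bs M G).
Local Notation Um := (Um bs M G).
Local Notation Lm := (Lm bs M G).
Local Notation Uinv := (Uinv bs G).
Local Notation Dinv := (Dinv bs G).
Local Notation Gv := (Gv n G).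
Local Notation msk2 := (msk2 n).

Definition tU j w p := \sum_(cc < n j.+1) M p cc * msk2 j w cc.
Definition zU i j w s := msk2 j w s - ((s < n i)%N)%:R * Gv i (tU j w) s.

Lemma U_rep i j w N r : (n i <= N)%N -> (n j.+1 <= N)%N -> bk r = i ->
  \sum_(n j <= cc < n j.+1) Um r cc * w cc = \sum_(s < N) M r s * zU i j w s.
Proof.
move=> h1 h2 hr.
under eq_big_nat => cc _ do rewrite /Um hr mulrBl.
rewrite sumrB.
under [RHS]eq_bigr => s _ do rewrite /zU mulrBr.
rewrite sumrB; congr (_ - _).
  by rewrite (msk_sum bs w (M r) h2).
rewrite -(msk_sum bs w (fun cc => \sum_(p < n i) (\sum_(q < n i) M r q * G i q p) * M p cc) (leqnn _)).
rewrite -(sum_exch3' (fun p => \sum_(q < n i) M r q * G i q p) (fun p cc => M p cc) (msk2 j w)).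
rewrite (sum_exch3 (fun q => M r q) (fun q p => G i q p) (fun p _ => tU j w p)).
under [RHS]eq_bigr => s _ do rewrite mulrCA.
by rewrite (sum_ind (fun s => M r s * Gv i (tU j w) s) h1).
Qed.

Lemma zU_nrm i j w N : (n j.+1 <= N)%N ->
  \sum_(s < N) zU i j w s ^+ 2 <=
  (2 + 2 * ((c ^+ 2)^-1 * CM)) * \sum_(n j <= cc < n j.+1) w cc ^+ 2.
Proof.
move=> hN.
set W := \sum_(n j <= cc < n j.+1) w cc ^+ 2.
apply: (@le_trans _ _ (\sum_(s < N) (2 * msk2 j w s ^+ 2 + 2 * (((s < n i)%N)%:R * Gv i (tU j w) s) ^+ 2))).
  by apply: ler_sum => s _; exact: sqB.
rewrite big_split /= -!mulr_sumr (msk_nrm bs w hN) [X in _ <= X]mulrDl; apply: lerD => //.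
rewrite -mulrA; apply: ler_wpM2l => //.
under eq_bigr => s _ do rewrite sq_ind.
apply: (@le_trans _ _ (\sum_(s < n i) Gv i (tU j w) s ^+ 2)).
  case: (leqP (n i) N) => hiN.
    by rewrite (sum_ind (fun s => Gv i (tU j w) s ^+ 2) hiN).
  rewrite (eq_bigr (fun s : 'I_N => Gv i (tU j w) s ^+ 2)); last first.
    by move=> s _; rewrite (leq_trans (ltn_ord s) (ltnW hiN)) mul1r.
  apply: (@sum_widen_le _ (fun s => Gv i (tU j w) s ^+ 2) N (n i) (ltnW hiN)) => s.
  exact: sqr_ge0.
apply: le_trans (G_bound hMG hc hell i (tU j w)) _.
rewrite -mulrA; apply: ler_wpM2l; first by rewrite invr_ge0 exprn_ge0 // ltW.
rewrite /W /tU -(msk_nrm bs w (leqnn _)); exact: hCM.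
Qed.

Lemma U_blk i j w :
  \sum_(n i <= r < n i.+1) (\sum_(n j <= cc < n j.+1) Um r cc * w cc) ^+ 2 <=
  (CM * (2 + 2 * ((c ^+ 2)^-1 * CM))) * \sum_(n j <= cc < n j.+1) w cc ^+ 2.
Proof.
set N := n (i + j).+1.
have h1 : (n i <= N)%N by rewrite (n_le_iff bs); exact: leq_trans (leq_addr j i) (leqnSn _).
have h2 : (n j.+1 <= N)%N by rewrite (n_le_iff bs) ltnS leq_addl.
rewrite (@eq_big_nat _ _ _ _ _ _ (fun r => (\sum_(s < N) M r s * zU i j w s) ^+ 2)); last first.
  by move=> r hr; rewrite (U_rep w h1 h2 (blkE bs hr)).
apply: (le_trans (@sum_rng_le _ (fun r => (\sum_(s < N) M r s * zU i j w s) ^+ 2) (n i) (n i.+1) _)).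
  by move=> r; exact: sqr_ge0.
apply: le_trans (hCM N (n i.+1) (zU i j w)) _.
rewrite -mulrA; apply: ler_wpM2l; first exact: (CM0 hCM).
exact: zU_nrm.
Qed.

End Anal2.


Section Anal3.
Variable R : realType.
Variable n : nat -> nat.
Hypothesis bs : block_structure n.
Variable M : nat -> nat -> R.
Variable G : nat -> nat -> nat -> R.
Hypothesis hMG : forall k, inv_on (n k) M (G k).
Hypothesis hGM : forall k, inv_on (n k) (G k) M.
Variable CM : R.
Hypothesis hCM : forall (N m : nat) (x : nat -> R), \sum_(i < m) (\sum_(j < N) M i j * x j) ^+ 2 <=
  CM * \sum_(j < N) x j ^+ 2.
Variable c : R.
Hypothesis hc : 0 < c.
Hypothesis hell : forall (N : nat) (x : nat -> R), c * \sum_(i < N) x i ^+ 2 <=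
  \sum_(i < N) \sum_(j < N) x i * M i j * x j.
Local Notation bk := (@blk n bs).
Local Notation Linv := (Linv bs M G).
Local Notation Um := (Um bs M G).
Local Notation Lm := (Lm bs M G).
Local Notation Uinv := (Uinv bs G).
Local Notation Dinv := (Dinv bs G).
Local Notation Gv := (Gv n G).
Local Notation msk2 := (msk2 n).
Local Notation tU := (tU n M).
Local Notation zU := (zU n M G).

Lemma dinv_arith (c0 K A Z Q : R) : 0 < c0 -> 0 <= K -> 0 <= Z -> A <= K * Z ->
  c0 * Z <= Q -> c0 / (K + 1) * A <= Q.
Proof.
move=> h1 h2 h3 h4 h5.
have hK : 0 < K + 1 by apply: lt_le_trans (ltr01) _; rewrite lerDr.
rewrite mulrAC ler_pdivrMr //.
have e1 : 0 <= K * (Q - c0 * Z) by apply: mulr_ge0 => //; rewrite subr_ge0.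
have e2 : 0 <= c0 * (K * Z - A) by apply: mulr_ge0; [exact: ltW | rewrite subr_ge0].
have e3 : 0 <= Q by apply: le_trans h5; apply: mulr_ge0 => //; exact: ltW.
nra.
Qed.

Lemma Mz_zero i x r : (r < n i)%N -> \sum_(s < n i.+1) M r s * zU i i x s = 0.
Proof.
move=> hr; rewrite /zU.
under eq_bigr => s _ do rewrite mulrBr mulrCA.
rewrite sumrB (sum_ind (fun s => M r s * Gv i (tU i x) s)); last exact: ltnW (n_lt bs (ltnSn i)).
by rewrite (MGv hMG) // subrr.
Qed.

Lemma zU_in i x r : (n i <= r)%N -> (r < n i.+1)%N -> zU i i x r = x r.
Proof. by move=> h1 h2; rewrite /zU /msk2 h1 h2 /= ltnNge h1 /= mul0r subr0. Qed.

Lemma D_blk_ell i x : c * \sum_(n i <= r < n i.+1) x r ^+ 2 <=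
  \sum_(n i <= r < n i.+1) x r * \sum_(n i <= s < n i.+1) Um r s * x s.
Proof.
set z := zU i i x.
have hin : (n i <= n i.+1)%N := ltnW (n_lt bs (ltnSn i)).
have hq : \sum_(r < n i.+1) \sum_(s < n i.+1) z r * M r s * z s =
    \sum_(n i <= r < n i.+1) x r * \sum_(n i <= s < n i.+1) Um r s * x s.
  under eq_bigr => r _ do under eq_bigr => s _ do rewrite -mulrA.
  under eq_bigr => r _ do rewrite -mulr_sumr.
  rewrite -(big_mkord xpredT (fun r => z r * \sum_(s < n i.+1) M r s * z s)).
  rewrite (@big_cat_nat _ _ _ (n i)) //= big_nat_cond big1 ?add0r; last first.
    by move=> r /andP [/andP [_ h] _]; rewrite /z Mz_zero // mulr0.
  apply: eq_big_nat => r /andP [h1 h2].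
  by rewrite /z zU_in // (U_rep M G x hin (leqnn _) (blkE bs (_ : in_block n i r))) // /in_block h1 h2.
rewrite -hq; apply: le_trans (hell (n i.+1) z); apply: ler_wpM2l; first exact: ltW.
rewrite (@eq_big_nat _ _ _ _ _ _ (fun r => z r ^+ 2)); last first.
  by move=> r /andP [h1 h2]; rewrite /z zU_in.
by apply: sum_rng_le => r; exact: sqr_ge0.
Qed.

Lemma Dinv_blk_ell i x : (c / (CM + 1)) * \sum_(n i <= r < n i.+1) x r ^+ 2 <=
  \sum_(n i <= r < n i.+1) x r * \sum_(n i <= s < n i.+1) G i.+1 r s * x s.
Proof.
set w := msk2 i x; set z := Gv i.+1 w.
have e1 : \sum_(n i <= r < n i.+1) x r * \sum_(n i <= s < n i.+1) G i.+1 r s * x s =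
    \sum_(r < n i.+1) \sum_(s < n i.+1) z r * M r s * z s.
  rewrite (eq_bigr (fun r : 'I_(n i.+1) => z r * w r)); last first.
    move=> r _; rewrite -(MGv hMG w (ltn_ord r)) mulr_sumr.
    by apply: eq_bigr => s _; rewrite mulrA.
  rewrite /w (msk_sum bs x z (leqnn _)).
  apply: eq_big_nat => r _; rewrite mulrC; congr (_ * _).
  by rewrite /z /Gv (msk_sum bs x (G i.+1 r) (leqnn _)).
rewrite e1; apply: (dinv_arith hc (CM0 hCM) (nrm_ge0 _ _)) (hell _ _).
rewrite -(msk_nrm bs x (leqnn _)).
rewrite (eq_bigr (fun r : 'I_(n i.+1) => (\sum_(s < n i.+1) M r s * z s) ^+ 2)); last first.
  by move=> r _; rewrite /z (MGv hMG).
exact: hCM.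
Qed.

Lemma quad_blk (A : nat -> nat -> R) (hA : forall r s, bk r != bk s -> A r s = 0) K (x : nat -> R) :
  \sum_(r < n K) \sum_(s < n K) x r * A r s * x s =
  \sum_(i < K) \sum_(n i <= r < n i.+1) x r * \sum_(n i <= s < n i.+1) A r s * x s.
Proof.
rewrite (sum_blocks bs (fun r => \sum_(s < n K) x r * A r s * x s)).
apply: eq_bigr => i _; apply: eq_big_nat => r hr.
rewrite (sum_blocks bs (fun s => x r * A r s * x s)) (bigD1 i) //= [X in _ + X]big1 ?addr0.
  by rewrite mulr_sumr; apply: eq_bigr => s _; rewrite mulrA.
move=> j hj; rewrite big_nat_cond big1 // => s /andP [hs _].
rewrite hA ?mulr0 ?mul0r //.
by rewrite (blkE bs hr) (blkE bs hs); apply: contra hj => /eqP e; apply/eqP/val_inj.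
Qed.

End Anal3.


Section Anal4.
Variable R : realType.
Variable n : nat -> nat.
Hypothesis bs : block_structure n.
Variable M : nat -> nat -> R.
Variable G : nat -> nat -> nat -> R.
Hypothesis hMG : forall k, inv_on (n k) M (G k).
Hypothesis hGM : forall k, inv_on (n k) (G k) M.
Variable CM : R.
Hypothesis hCM : forall (N m : nat) (x : nat -> R), \sum_(i < m) (\sum_(j < N) M i j * x j) ^+ 2 <=
  CM * \sum_(j < N) x j ^+ 2.
Variable c : R.
Hypothesis hc : 0 < c.
Hypothesis hell : forall (N : nat) (x : nat -> R), c * \sum_(i < N) x i ^+ 2 <=
  \sum_(i < N) \sum_(j < N) x i * M i j * x j.
Local Notation bk := (@blk n bs).
Local Notation Linv := (Linv bs M G).
Local Notation Um := (Um bs M G).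
Local Notation Lm := (Lm bs M G).
Local Notation Uinv := (Uinv bs G).
Local Notation Dinv := (Dinv bs G).
Local Notation Gv := (Gv n G).
Local Notation msk2 := (msk2 n).

Definition CU := CM * (2 + 2 * ((c ^+ 2)^-1 * CM)).

Lemma ci_ge0 : 0 <= (c ^+ 2)^-1.
Proof. by rewrite invr_ge0 exprn_ge0 // ltW. Qed.

Lemma CU_ge0 : 0 <= CU.
Proof.
have h0 := CM0 hCM; have h1 := ci_ge0.
apply: mulr_ge0 => //; apply: addr_ge0 => //; apply: mulr_ge0 => //; exact: mulr_ge0.
Qed.

Lemma sqsum_ge0 (w : nat -> R) a b : 0 <= \sum_(a <= s < b) w s ^+ 2.
Proof. by apply: sumr_ge0 => s _; exact: sqr_ge0. Qed.

Lemma U_sec b0 : block_banded n b0 M -> secbnd n Um (((2 * b0).+1)%:R ^+ 2 * CU).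
Proof.
move=> hb; apply: (banded_bnd bs (banded_U bs hGM hb) CU_ge0).
exact: (U_blk bs hMG hCM hc hell).
Qed.

Lemma L_sec b0 : block_banded n b0 M -> secbnd n Lm (((2 * b0).+1)%:R ^+ 2 * (CM * (c ^+ 2)^-1)).
Proof.
move=> hb; apply: (banded_bnd bs (banded_L bs hMG hb)).
  exact: mulr_ge0 (CM0 hCM) ci_ge0.
exact: (L_blk bs hMG hCM hc hell).
Qed.

Lemma sec_ge0 (A : nat -> nat -> R) (C : R) : secbnd n A C -> 0 <= C.
Proof.
move=> h; have := h 1%N (fun _ => 1).
set N := n 1.
have hN : (0 < N)%N by exact: (n_ge bs 1).
have hpos : 0 < \sum_(cc < N) (1 : R) ^+ 2.
  apply: (@lt_le_trans _ _ ((1 : R) ^+ 2)); first by rewrite expr1n ltr01.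
  rewrite (bigD1 (Ordinal hN)) //= lerDl; apply: sumr_ge0 => i _; exact: sqr_ge0.
move=> h1; have h2 : 0 <= C * \sum_(cc < N) (1 : R) ^+ 2.
  apply: le_trans h1; apply: sumr_ge0 => i _; exact: sqr_ge0.
by rewrite pmulr_lge0 in h2.
Qed.

Lemma Linv_sec K r s : (r < n K)%N -> (s < n K)%N ->
  Linv r s = \sum_(p < n K) Um r p * G K p s.
Proof.
move=> hr hs.
have hN : (n (bk r).+1 <= n K)%N by rewrite (n_le_iff bs) -(ltn_blk bs).
rewrite (eq_bigr (fun p : 'I_(n K) => (\sum_(q < n K) Linv r q * M q p) * G K p s)); last first.
  by move=> p _; rewrite (Linv_sum M G p hN).
rewrite (sum_exch3 (fun q => Linv r q) (fun q p => M q p) (fun p _ => G K p s)).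
under eq_bigr => q _ do rewrite hMG //.
by rewrite (sum_delta_r (fun q => Linv r q)).
Qed.

Lemma Uinv_sec K r s : (r < n K)%N -> (s < n K)%N ->
  Uinv r s = \sum_(p < n K) G K r p * Lm p s.
Proof.
move=> hr hs.
have hj : (n (bk s).+1 <= n K)%N by rewrite (n_le_iff bs) -(ltn_blk bs).
rewrite /Lm (sum_exch3' (fun p => G K r p) (fun p q => M p q) (fun q => G (bk s).+1 q s)).
rewrite (eq_bigr (fun q : 'I_(n (bk s).+1) => (r == q)%:R * G (bk s).+1 q s)); last first.
  by move=> q _; rewrite hGM // (leq_trans (ltn_ord q) hj).
rewrite /Uinv; case: (ltnP r (n (bk s).+1)) => h.
  by rewrite (sum_delta_l (fun q => G (bk s).+1 q s)) // mul1r.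
rewrite mul0r big1 // => q _; rewrite (_ : (r == q) = false) ?mul0r //.
by apply/negbTE; rewrite neq_ltn (leq_trans (ltn_ord q) h) orbT.
Qed.

Lemma Linv_secbnd CC : secbnd n Um CC -> secbnd n Linv (CC * (c ^+ 2)^-1).
Proof.
move=> hU K x; have hC := sec_ge0 hU.
rewrite (eq_bigr (fun r : 'I_(n K) => (\sum_(p < n K) Um r p * Gv K x p) ^+ 2)); last first.
  move=> r _; congr (_ ^+ 2).
  rewrite (eq_bigr (fun s : 'I_(n K) => (\sum_(p < n K) Um r p * G K p s) * x s)); last first.
    by move=> s _; rewrite (Linv_sec (ltn_ord r) (ltn_ord s)).
  by rewrite -sum_exch3'.
apply: le_trans (hU K (Gv K x)) _.
rewrite -mulrA; apply: ler_wpM2l => //; exact: (G_bound hMG hc hell).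
Qed.

Lemma Uinv_secbnd CC : secbnd n Lm CC -> secbnd n Uinv ((c ^+ 2)^-1 * CC).
Proof.
move=> hL K x; have hC := sec_ge0 hL.
pose v p := \sum_(s < n K) Lm p s * x s.
rewrite (eq_bigr (fun r : 'I_(n K) => Gv K v r ^+ 2)); last first.
  move=> r _; congr (_ ^+ 2).
  rewrite (eq_bigr (fun s : 'I_(n K) => (\sum_(p < n K) G K r p * Lm p s) * x s)); last first.
    by move=> s _; rewrite (Uinv_sec (ltn_ord r) (ltn_ord s)).
  by rewrite -sum_exch3'.
apply: le_trans (G_bound hMG hc hell K v) _.
rewrite -mulrA; apply: ler_wpM2l; first exact: ci_ge0.
exact: hL.
Qed.

Lemma D_ell D : block_diag_part n Um D -> elliptic_mx D.
Proof.
move=> hD; have hDe := D_eq hD.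
apply: (ell_sec bs hc) => K x.
have hA : forall r s, bk r != bk s -> D r s = 0 by move=> r s h; rewrite hDe (negbTE h).
rewrite (quad_blk hA).
rewrite (sum_blocks bs (fun r => x r ^+ 2)) mulr_sumr; apply: ler_sum => i _.
rewrite [X in _ <= X](@eq_big_nat _ _ _ _ _ _ (fun r => x r * \sum_(n i <= s < n i.+1) Um r s * x s)); last first.
  move=> r hr; congr (_ * _); apply: eq_big_nat => s hs.
  by rewrite hDe (blkE bs hr) (blkE bs hs) eqxx.
exact: (D_blk_ell bs hMG hc hell).
Qed.

Lemma Dinv_ell : elliptic_mx Dinv.
Proof.
have hpos : 0 < c / (CM + 1).
  apply: divr_gt0 => //; apply: lt_le_trans (ltr01) _; rewrite lerDr; exact: CM0 hCM.
apply: (ell_sec bs hpos) => K x.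
have hA : forall r s, bk r != bk s -> Dinv r s = 0 by move=> r s h; rewrite /Dinv (negbTE h) mul0r.
rewrite (quad_blk hA).
rewrite (sum_blocks bs (fun r => x r ^+ 2)) mulr_sumr; apply: ler_sum => i _.
rewrite [X in _ <= X](@eq_big_nat _ _ _ _ _ _ (fun r => x r * \sum_(n i <= s < n i.+1) G i.+1 r s * x s)); last first.
  move=> r hr; congr (_ * _); apply: eq_big_nat => s hs.
  by rewrite /Dinv (blkE bs hr) (blkE bs hs) eqxx mul1r.
exact: (Dinv_blk_ell bs hMG hCM hc hell).
Qed.

Lemma D_bnd D : block_diag_part n Um D -> bounded_mx D.
Proof.
move=> hD; have hDe := D_eq hD.
apply: (bnd_sec bs); apply: (@banded_bnd _ _ bs D 0 CU); first 2 last.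
- move=> i j w; case: (eqVneq i j) => [<-|hij].
    rewrite (@eq_big_nat _ _ _ _ _ _ (fun r => (\sum_(n i <= s < n i.+1) Um r s * w s) ^+ 2)).
      exact: (U_blk bs hMG hCM hc hell).
    move=> r hr; congr (_ ^+ 2); apply: eq_big_nat => s hs.
    by rewrite hDe (blkE bs hr) (blkE bs hs) eqxx.
  rewrite big_nat_cond big1; first by apply: mulr_ge0; [exact: CU_ge0 | exact: sqsum_ge0].
  move=> r /andP [hr _]; rewrite big_nat_cond big1 ?expr0n // => s /andP [hs _].
  by rewrite hDe (blkE bs hr) (blkE bs hs) (negbTE hij) mul0r.
- move=> i j r s hr hs h; rewrite hDe (blkE bs hr) (blkE bs hs).
  by case: eqP => // e; move: h; rewrite e subnn.
- exact: CU_ge0.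
Qed.

Lemma Dinv_bnd : bounded_mx Dinv.
Proof.
apply: (bnd_sec bs); apply: (@banded_bnd _ _ bs Dinv 0 ((c ^+ 2)^-1)); first 2 last.
- move=> i j w; case: (eqVneq i j) => [<-|hij].
    rewrite (@eq_big_nat _ _ _ _ _ _ (fun r => Gv i.+1 (msk2 i w) r ^+ 2)).
      apply: le_trans (@sum_rng_le _ (fun r => Gv i.+1 (msk2 i w) r ^+ 2) (n i) (n i.+1) _) _.
        by move=> r; exact: sqr_ge0.
      rewrite -(msk_nrm bs w (leqnn _)); exact: (G_bound hMG hc hell).
    move=> r hr; congr (_ ^+ 2); rewrite /Gv (msk_sum bs w (G i.+1 r) (leqnn _)).
    apply: eq_big_nat => s hs.
    by rewrite /Dinv (blkE bs hr) (blkE bs hs) eqxx mul1r.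
  rewrite big_nat_cond big1; first by apply: mulr_ge0; [exact: ci_ge0 | exact: sqsum_ge0].
  move=> r /andP [hr _]; rewrite big_nat_cond big1 ?expr0n // => s /andP [hs _].
  by rewrite /Dinv (blkE bs hr) (blkE bs hs) (negbTE hij) !mul0r.
- move=> i j r s hr hs h; rewrite /Dinv (blkE bs hr) (blkE bs hs).
  by case: eqP => [e|]; [move: h; rewrite e subnn | rewrite mul0r].
- exact: ci_ge0.
Qed.

End Anal4.


Unset Implicit Arguments.
Local Close Scope classical_set_scope.

Theorem lemma3p7 (R : realType) (M : nat -> nat -> R) (n : nat -> nat) (b0 : nat) :
  bounded_mx M -> elliptic_mx M -> block_structure n -> block_banded n b0 M ->
  exists L U : nat -> nat -> R,
    [/\ block_lower n L, block_upper n U, unit_diag_blocks n L & mx_prod_is L U M] /\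
    [/\ block_banded n b0 L, block_banded n b0 U, bounded_mx L, bounded_mx U &
        exists Linv Uinv : nat -> nat -> R,
          [/\ inverse_mx L Linv, inverse_mx U Uinv, bounded_mx Linv & bounded_mx Uinv]] /\
    (forall D : nat -> nat -> R, block_diag_part n U D ->
       [/\ bounded_mx D, elliptic_mx D &
           exists Dinv : nat -> nat -> R,
             [/\ inverse_mx D Dinv, bounded_mx Dinv & elliptic_mx Dinv]]).
Proof.
move=> [CM hCM] [c [hc hell]] bs hb.
have hex : forall k, exists Gk, inv_on (n k) M Gk.
  move=> k; apply: inv_on_ex => x hx r hr.
  have hq : \sum_(i < n k) \sum_(j < n k) x i * M i j * x j = 0.
    rewrite exchange_big big1 // => j _.
    by rewrite -mulr_suml hx // mul0r.
  have h1 := hell (n k) x; rewrite hq pmulr_rle0 // in h1.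
  have h0 : \sum_(i < n k) x i ^+ 2 = 0.
    by apply/eqP; rewrite eq_le h1; apply: sumr_ge0 => i _; exact: sqr_ge0.
  have : x r ^+ 2 <= 0.
    rewrite -h0 (bigD1 (Ordinal hr)) //= lerDl; apply: sumr_ge0 => i _; exact: sqr_ge0.
  by rewrite le_eqVlt ltNge sqr_ge0 orbF sqrf_eq0 => /eqP.
case: (boolp.choice hex) => G hMG.
have hGM : forall k, inv_on (n k) (G k) M by move=> k; exact: inv_on_sym.
have hL := L_sec bs hMG hCM hc hell hb.
have hU := U_sec bs hMG hGM hCM hc hell hb.
exists (Lm bs M G), (Um bs M G); split; [|split].
- split.
  + move=> i j r c0; exact: (blk_lower_L bs hMG).
  + move=> i j r c0; exact: (blk_upper_U bs hGM).
  + move=> i r c0; exact: (unit_diag_L bs hMG).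
  + exact: (prod_LU bs hMG hGM).
- split.
  + move=> i j r c0; exact: (banded_L bs hMG hb).
  + move=> i j r c0; exact: (banded_U bs hGM hb).
  + exact: (bnd_sec bs hL).
  + exact: (bnd_sec bs hU).
  + exists (Linv bs M G), (Uinv bs G); split.
    * exact: (inv_L bs hMG hGM).
    * exact: (inv_U bs hMG hGM).
    * exact: (bnd_sec bs (Linv_secbnd hMG hc hell hU)).
    * exact: (bnd_sec bs (Uinv_secbnd hMG hGM hc hell hL)).
- move=> D hD; split.
  + exact: (D_bnd hMG hCM hc hell hD).
  + exact: (D_ell hMG hc hell hD).
  + exists (Dinv bs G); split.
    * exact: (inv_D hMG hGM hD).
    * exact: (Dinv_bnd bs hMG hc hell).
    * exact: (Dinv_ell bs hMG hCM hc hell).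
Qed.
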